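(* For all $n\ge0$, $$F_n(x,y,q)=\sum_{k\ge0}x^{n-2k}y^kq^{\binom k2+\binom{n-k}2}\begin{bmatrix}n-k\\k\end{bmatrix}_q.$$ More precisely, for each $k$, the sum of $q^{rb(\pi)}$ over those $\pi\in\Pi_n(13/2,123)$ with exactly $k$ two-element blocks equals $q^{\binom k2+\binom{n-k}2}\begin{bmatrix}n-k\\k\end{bmatrix}_q$.
   Context: $\Pi_n(13/2,123)$ is the set of layered matchings of $[n]$: set partitions whose blocks are consecutive intervals $[1,i_1]/\dots/[i_{k-1}+1,n]$, each of size $1$ or $2$. $\Pi_0(13/2,123)$ consists of the empty partition. For $\pi=B_1/\dots/B_k$ with $\min B_1<\dots<\min B_k$, $rb(\pi)$ is the number of pairs $(b,B_j)$ with $b\in B_i$, $j>i$, $\max B_j>b$. Let $s(\pi)$ and $d(\pi)$ be the numbers of blocks of size $1$ and $2$. Define $F_n(x,y,q)=\sum_{\pi\in\Pi_n(13/2,123)}x^{s(\pi)}y^{d(\pi)}q^{rb(\pi)}$. The $q$-binomial coefficient is $\begin{bmatrix}n\\k\end{bmatrix}_q=\prod_{i=1}^k\frac{q^{n-i+1}-1}{q^i-1}$ for $0\le k\le n$, and it is $0$ if $k>n$. *)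

(* Defs.v *)
From HB Require Import structures.
From mathcomp Require Import all_boot all_order all_algebra.
Set Implicit Arguments. Unset Strict Implicit. Unset Printing Implicit Defensive.
Import Order.TTheory GRing.Theory Num.Theory.

Fixpoint comps12 (n : nat) : seq (seq nat) :=
  match n with
  | 0 => [:: [::]]
  | 1 => [:: [:: 1]]
  | (m.+1 as n').+1 => [seq 1 :: c | c <- comps12 n'] ++ [seq 2 :: c | c <- comps12 m]
  end.

Fixpoint blocks_of (a : nat) (c : seq nat) : seq (seq nat) :=
  match c with
  | [::] => [::]
  | p :: c' => iota a p :: blocks_of (a + p) c'
  end.

(* Pi_n(13/2,123): layered matchings of [n] = {1,...,n}, each given as the
   list of its blocks B_1, ..., B_k (ordered by increasing minima), each block
   listed as the increasing sequence of its elements. *)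
Definition layered_matchings (n : nat) : seq (seq (seq nat)) :=
  [seq blocks_of 1 c | c <- comps12 n].

Definition rb (bs : seq (seq nat)) : nat :=
  \sum_(i < size bs) \sum_(b <- nth [::] bs i)
     \sum_(i.+1 <= j < size bs) (b < \max_(c <- nth [::] bs j) c).

Definition nsingle (bs : seq (seq nat)) : nat := count (fun B => size B == 1) bs.
Definition ndouble (bs : seq (seq nat)) : nat := count (fun B => size B == 2) bs.

Local Open Scope ring_scope.

Definition Rq := {fraction {poly int}}.
Definition qv : Rq := tofrac ('X : {poly int}).

Definition qbinom (n k : nat) : Rq :=
  if (k <= n)%N then
    \prod_(1 <= i < k.+1) ((qv ^+ (n - i + 1) - 1) / (qv ^+ i - 1))
  else 0.

(* F_n(x,y,q) in Rq[y][x]: x is the outer variable 'X, y is ('X)%:P. *)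
Definition xv : {poly {poly Rq}} := 'X.
Definition yv : {poly {poly Rq}} := ('X)%:P.
Definition qc (r : Rq) : {poly {poly Rq}} := (r%:P)%:P.

Definition Fn (n : nat) : {poly {poly Rq}} :=
  \sum_(pi <- layered_matchings n)
     xv ^+ nsingle pi * yv ^+ ndouble pi * qc (qv ^+ rb pi).

(* Main.v *)
Require Import Defs.
From HB Require Import structures.
From mathcomp Require Import all_boot all_order all_algebra.
From Stdlib Require Import Lia.
Import GRing.Theory.
Ltac nlia := rewrite -?plusE -?minusE -?multE; lia.
Fixpoint rbc (c : seq nat) : nat := if c is p :: c' then p * size c' + rbc c' else 0.

Lemma size_blocks a c : size (blocks_of a c) = size c.
Proof. by elim: c a => //= p c IH a; rewrite IH. Qed.

Lemma ndouble_blocks a c : ndouble (blocks_of a c) = count (fun p => p == 2) c.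
Proof. elim: c a => //= p c IH a; rewrite size_iota; congr (_ + _); exact: IH. Qed.

Lemma nsingle_blocks a c : nsingle (blocks_of a c) = count (fun p => p == 1) c.
Proof. elim: c a => //= p c IH a; rewrite size_iota; congr (_ + _); exact: IH. Qed.

Lemma rb_cons B bs :
  (forall b, b \in B -> forall j, j < size bs -> b < \max_(x <- nth [::] bs j) x) ->
  rb (B :: bs) = size B * size bs + rb bs.
Proof.
move=> H; rewrite /rb /= big_ord_recl /=; congr (_ + _).
  rewrite (eq_big_seq (fun _ => size bs)).
    by rewrite big_const_seq count_predT iter_addn_0 mulnC.
  move=> b bB /=; rewrite big_add1 /= big_mkord (eq_bigr (fun _ => 1)).
    by rewrite sum1_card card_ord.
  by move=> j _; rewrite H.
apply: eq_bigr => i _; rewrite /bump /= add0n; apply: eq_bigr => b _.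
by rewrite big_add1 /=.
Qed.

Lemma blocks_max b a' c j : b < a' -> all (fun p => 0 < p) c -> j < size c ->
  b < \max_(x <- nth [::] (blocks_of a' c) j) x.
Proof.
elim: c a' j => [|p c IH] a' j //= hb /andP [pp cp].
case: j => [|j] hj /=.
  apply: leq_trans hb _; have h := @leq_bigmax_seq _ (iota a' p) xpredT id a'.
  apply: h => //; by rewrite mem_iota leqnn /= -{1}[a']addn0 ltn_add2l.
by apply: IH => //; rewrite ltn_addr.
Qed.

Lemma rb_blocks a c : all (fun p => 0 < p) c -> rb (blocks_of a c) = rbc c.
Proof.
elim: c a => [|p c IH] a; first by rewrite /rb big_ord0.
move=> /= /andP [pp cp]; rewrite rb_cons ?size_iota ?size_blocks ?IH //.
move=> b; rewrite mem_iota => /andP [_ hb] j hj.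
by apply: blocks_max => //; rewrite size_blocks in hj.
Qed.

Definition c1 (c : seq nat) := count (fun p => p == 1) c.
Definition c2 (c : seq nat) := count (fun p => p == 2) c.
Lemma c1_cons p c : c1 (p :: c) = (p == 1) + c1 c. Proof. by []. Qed.
Lemma c2_cons p c : c2 (p :: c) = (p == 2) + c2 c. Proof. by []. Qed.
Lemma c1_nil : c1 [::] = 0. Proof. by []. Qed.
Lemma c2_nil : c2 [::] = 0. Proof. by []. Qed.
Arguments c1 : simpl never.
Arguments c2 : simpl never.

Lemma comps12_SS n : comps12 n.+2 = [seq 1 :: c | c <- comps12 n.+1] ++ [seq 2 :: c | c <- comps12 n].
Proof. by []. Qed.

Lemma comps_all n : (forall c, c \in comps12 n -> all (fun p => (p == 1) || (p == 2)) c && (sumn c == n))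
  /\ (forall c, c \in comps12 n.+1 -> all (fun p => (p == 1) || (p == 2)) c && (sumn c == n.+1)).
Proof.
elim: n => [|n [IH1 IH2]].
  split => c /=; rewrite mem_seq1 => /eqP -> //.
split => // c; rewrite comps12_SS mem_cat => /orP [] /mapP [c' hc' ->] /=.
  by move: (IH2 c' hc') => /andP [h1 /eqP h2]; rewrite h2 eqxx andbT.
by move: (IH1 c' hc') => /andP [h1 /eqP h2]; rewrite h2 eqxx andbT.
Qed.

Lemma all12_props c : all (fun p => (p == 1) || (p == 2)) c ->
  [/\ sumn c = c1 c + 2 * c2 c, size c = c1 c + c2 c & all (fun p => 0 < p) c].
Proof.
elim: c => [|p c IH] /=; first by rewrite c1_nil c2_nil.
move=> /andP [hp /IH [h1 h2 h3]]; rewrite c1_cons c2_cons.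
case/orP: hp => /eqP -> /=; rewrite h1 h2 h3; split => //; nlia.
Qed.

Lemma comps_props n c : c \in comps12 n ->
  [/\ c1 c + 2 * c2 c = n, size c + c2 c = n & all (fun p => 0 < p) c].
Proof.
move=> hc; case/andP: ((comps_all n).1 c hc) => /all12_props [h1 h2 h3] /eqP hs.
split => //; move: hs h1 h2; nlia.
Qed.

Local Open Scope ring_scope.

Definition fq (j : nat) : Rq := qv ^+ j - 1.
Definition Mq (n k : nat) : Rq := \prod_(1 <= i < k.+1) fq (n.+1 - i).
Definition Dq (k : nat) : Rq := \prod_(1 <= i < k.+1) fq i.

Lemma fq_neq0 j : (0 < j)%N -> fq j != 0.
Proof.
move=> hj; rewrite /fq /qv -rmorphXn -(rmorph1 (@tofrac _)) -rmorphB tofrac_eq0.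
by rewrite -size_poly_eq0 size_Xn_sub_1.
Qed.

Lemma Dq_neq0 k : Dq k != 0.
Proof.
elim: k => [|k IH].
  rewrite /Dq big_geq; [exact: oner_neq0 | exact: leqnn].
rewrite /Dq big_nat_recr; last exact: ltn0Sn.
apply: mulf_neq0; [exact: IH | exact: fq_neq0].
Qed.

Lemma Mq_S p k : Mq p k.+1 = Mq p k * fq (p - k).
Proof. rewrite /Mq big_nat_recr; [by rewrite subSS | exact: ltn0Sn]. Qed.

Lemma Mq0 n k : (n < k)%N -> Mq n k = 0.
Proof.
elim: k => [|k IH] hk; first by [].
rewrite Mq_S.
case: (ltnP n k) => h; first by rewrite (IH h) mul0r.
have -> : k = n by apply/eqP; rewrite eqn_leq h -ltnS hk.
by rewrite subnn /fq expr0 subrr mulr0.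
Qed.

Lemma qbinomE n k : qbinom n k = Mq n k / Dq k.
Proof.
rewrite /qbinom; case: leqP => h; last by rewrite (@Mq0 _ _ h) mul0r.
rewrite /Mq /Dq -prodfV -big_split; apply: eq_big_nat => i /andP [h1 h2].
rewrite /fq addn1 subSn; first by [].
exact: (leq_trans _ h).
Qed.

Lemma qbinom0 n : qbinom n 0 = 1.
Proof. rewrite /qbinom big_geq; [by [] | exact: leqnn]. Qed.

Lemma qbinom_gt n k : (n < k)%N -> qbinom n k = 0.
Proof. by rewrite /qbinom ltnNge => /negbTE ->. Qed.

Lemma Mq_SS p k : Mq p.+1 k.+1 = fq p.+1 * Mq p k.
Proof.
rewrite /Mq big_nat_recl ?ltn0Sn.
rewrite subSS subn0; congr (_ * _).
by [].
Qed.

Lemma Dq_S k : Dq k.+1 = Dq k * fq k.+1.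
Proof. rewrite /Dq big_nat_recr; [by [] | exact: ltn0Sn]. Qed.

Lemma qpascal p k : qbinom p.+1 k.+1 = qbinom p k.+1 + qv ^+ (p - k) * qbinom p k.
Proof.
rewrite !qbinomE Mq_SS Mq_S Dq_S.
case: (ltnP p k) => h; first by rewrite (@Mq0 _ _ h) !(mulr0, mul0r, addr0).
have hf : fq p.+1 = fq (p - k) + qv ^+ (p - k) * fq k.+1.
  rewrite /fq mulrBr mulr1 -exprD addnS subnK; last exact: h.
  by rewrite [RHS]addrC addrA subrK.
have nz := @fq_neq0 _ (ltn0Sn k).
rewrite hf mulrDl mulrDl; congr (_ + _); first by rewrite [fq (p - k) * _]mulrC.
rewrite invfM -!mulrA; congr (_ * _); rewrite [fq k.+1 * _]mulrC -!mulrA; congr (_ * _).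
by rewrite mulVf ?mulr1; last exact: nz.
Qed.

Lemma rbc_cons p c : rbc (p :: c) = (p * size c + rbc c)%N. Proof. by []. Qed.

Definition G n k : Rq := \sum_(c <- comps12 n | c2 c == k) qv ^+ rbc c.
Definition Tm n k : Rq := qv ^+ ('C(k, 2) + 'C(n - k, 2)) * qbinom (n - k) k.

Lemma G_SS n k : G n.+2 k = qv ^+ (n.+1 - k) * G n.+1 k +
   (if k is k'.+1 then qv ^+ (2 * (n - k')) * G n k' else 0).
Proof.
rewrite {1}/G comps12_SS big_cat !big_map; congr (_ + _).
  rewrite /G big_distrr big_seq_cond [RHS]big_seq_cond; apply: eq_big.
    by move=> c; rewrite c2_cons.
  move=> c /andP [hc /eqP hk]; rewrite c2_cons add0n in hk; rewrite rbc_cons mul1n exprD; congr (_ * _).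
  by case: (@comps_props _ _ hc) => _ h _; rewrite -hk -h addnK.
case: k => [|k].
  by rewrite big_pred0 // => c; rewrite c2_cons.
rewrite /G big_distrr big_seq_cond [RHS]big_seq_cond; apply: eq_big.
  by move=> c; rewrite c2_cons.
move=> c /andP [hc /eqP hk]; rewrite c2_cons add1n in hk; case: hk => hk; rewrite rbc_cons exprD; congr (_ * _).
by case: (@comps_props _ _ hc) => _ h _; rewrite -hk -h addnK.
Qed.

Lemma G0 k : G 0 k = Tm 0 k.
Proof.
rewrite /G /Tm big_cons big_nil c2_nil.
case: k => [|k]; last by rewrite qbinom_gt // mulr0.
by rewrite eqxx qbinom0 mulr1 addr0.
Qed.

Lemma G1 k : G 1 k = Tm 1 k.
Proof.
rewrite /G /Tm big_cons big_nil c2_cons c2_nil.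
case: k => [|k]; last by rewrite qbinom_gt ?mulr0 // subSS sub0n.
by rewrite eqxx qbinom0 mulr1 addr0.
Qed.

Lemma Tm_SS n k : Tm n.+2 k = qv ^+ (n.+1 - k) * Tm n.+1 k +
   (if k is k'.+1 then qv ^+ (2 * (n - k')) * Tm n k' else 0).
Proof.
rewrite /Tm; case: k => [|k].
  rewrite !subn0 !qbinom0 !mulr1 addr0 -exprD; congr (_ ^+ _).
  have -> : 'C(0, 2) = 0%N by [].
  rewrite binS bin1; nlia.
case: (ltnP n (k + k)) => h.
  have h1 : (n.+2 - k.+1 < k.+1)%N by rewrite subSS; move: h => /ltP h; apply/ltP; move: h; nlia.
  have h2 : (n.+1 - k.+1 < k.+1)%N by rewrite subSS; move: h => /ltP h; apply/ltP; move: h; nlia.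
  have h3 : (n - k < k)%N by move: h => /ltP h; apply/ltP; move: h; nlia.
  by rewrite (@qbinom_gt _ _ h1) (@qbinom_gt _ _ h2) (@qbinom_gt _ _ h3) !mulr0 addr0.
rewrite subSS subSS (subSn (_ : k <= n)%N); last by move: h => /leP h; apply/leP; move: h; nlia.
rewrite qpascal mulrDr !mulrA -!exprD; congr (_ * _ + _ * _); congr (_ ^+ _).
  rewrite binS bin1 binS bin1; move: h => /leP; nlia.
rewrite binS bin1 binS bin1; move: h => /leP; nlia.
Qed.

Lemma GT n k : G n k = Tm n k.
Proof.
suff H : forall n, (forall k, G n k = Tm n k) /\ (forall k, G n.+1 k = Tm n.+1 k) by case: (H n).
elim=> [|m [IH1 IH2]]; first by split; [exact: G0 | exact: G1].
split; first exact: IH2.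
move=> j; rewrite G_SS Tm_SS IH2; case: j => [|j]; first by [].
by rewrite IH1.
Qed.

Lemma part2 n k : \sum_(pi <- layered_matchings n | ndouble pi == k) qv ^+ rb pi = Tm n k.
Proof.
rewrite -GT /G /layered_matchings big_map big_seq_cond [RHS]big_seq_cond.
apply: eq_big => c; first by rewrite ndouble_blocks.
move=> /andP [hc _]; case: (@comps_props _ _ hc) => _ _ hp.
by rewrite rb_blocks.
Qed.

Lemma qc_sum (I : Type) (s : seq I) (P : pred I) (F : I -> Rq) :
  qc (\sum_(i <- s | P i) F i) = \sum_(i <- s | P i) qc (F i).
Proof. by rewrite /qc !raddf_sum. Qed.

Lemma pick_sum (V : nmodType) n j (F : nat -> V) : (j < n.+1)%N ->
  \sum_(k < n.+1) (if j == k then F k else 0) = F j.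
Proof.
move=> hj; rewrite (bigD1 (Ordinal hj)) ?eqxx; last by [].
rewrite big1 ?Monoid.simpm // => k nk; case: eqP => // e; exfalso; move/eqP: nk; apply; apply: val_inj; by rewrite /= e.
Qed.

Lemma part1 n : Fn n = \sum_(k < n.+1) xv ^+ (n - 2 * k) * yv ^+ k * qc (Tm n k).
Proof.
rewrite /Fn.
transitivity (\sum_(pi <- layered_matchings n) \sum_(k < n.+1)
   (if ndouble pi == k then xv ^+ (n - 2 * k) * yv ^+ k * qc (qv ^+ rb pi) else 0)).
  rewrite /layered_matchings !big_map big_seq [RHS]big_seq; apply: eq_bigr => c hc.
  case: (@comps_props _ _ hc) => h1 _ _.
  have hj : (ndouble (blocks_of 1 c) < n.+1)%N.
    have hh : (c2 c <= n)%N by apply/leP; move: h1; nlia.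
    by rewrite ndouble_blocks ltnS; exact: hh.
  rewrite (@pick_sum _ n _ (fun k => xv ^+ (n - 2 * k) * yv ^+ k * qc (qv ^+ rb (blocks_of 1 c))) hj).
  by rewrite nsingle_blocks ndouble_blocks -h1 addnK.
rewrite exchange_big; apply: eq_bigr => k _.
rewrite -big_mkcond -big_distrr -qc_sum part2; by [].
Qed.

Theorem theorem4p6 :
  (forall n : nat,
     Fn n = \sum_(k < n.+1)
              xv ^+ (n - 2 * k) * yv ^+ k
              * qc (qv ^+ ('C(k, 2) + 'C(n - k, 2)) * qbinom (n - k) k))
  /\
  (forall n k : nat,
     \sum_(pi <- layered_matchings n | ndouble pi == k) qv ^+ rb pi
     = qv ^+ ('C(k, 2) + 'C(n - k, 2)) * qbinom (n - k) k).
Proof.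
split; [exact: part1 | exact: part2].
Qed.
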